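(* Let $A$ be a finite abelian group having no element of order $4$ and such that $H = Q_8 \times A$ is a hamiltonian group. Let $d$ be the number of elementary divisors of $A$. Then $\mathrm{fix}(H) = \{1,2,\ldots,d+1\}$.
   Context: All graphs are finite, simple and undirected, and all groups are finite. A non-abelian group is hamiltonian if every one of its subgroups is normal. $Q_8$ is the quaternion group of order $8$. The elementary divisors of a finite abelian group are the prime-power orders of the cyclic factors in its decomposition as a direct product of cyclic groups of prime-power order (counted with multiplicity). For a graph $\Gamma$ and $S \subseteq V(\Gamma)$, $\mathrm{stab}(S)=\{g\in \mathrm{Aut}\,\Gamma : g(s)=s \text{ for all } s\in S\}$; the fixing number of $\Gamma$ is the minimum $|S|$ with $\mathrm{stab}(S)$ trivial. For a finite group $G$, $\mathrm{fix}(G)$ is the set of all fixing numbers of graphs $\Gamma$ with $\mathrm{Aut}\,\Gamma\cong G$. *)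

(* Defs.v *)
From HB Require Import structures.
From mathcomp Require Import all_boot all_fingroup all_solvable.
Set Implicit Arguments. Unset Strict Implicit. Unset Printing Implicit Defensive.
Local Open Scope group_scope.

Definition simple_graph (V : finType) (e : rel V) : Prop :=
  symmetric e /\ irreflexive e.

Definition aut_set (V : finType) (e : rel V) : {set {perm V}} :=
  [set g : {perm V} | [forall x, forall y, e (g x) (g y) == e x y]].

Lemma aut_group_set (V : finType) (e : rel V) : group_set (aut_set e).
Proof.
apply/group_setP; split.
  by rewrite inE; apply/forallP=> x; apply/forallP=> y; rewrite !perm1.
move=> g h; rewrite !inE => /forallP Hg /forallP Hh.
apply/forallP=> x; apply/forallP=> y; rewrite !permM.
by rewrite (eqP (forallP (Hh (g x)) (g y))) (eqP (forallP (Hg x) y)).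
Qed.

Canonical aut_group (V : finType) (e : rel V) := Group (aut_group_set e).

Definition stab (V : finType) (e : rel V) (S : {set V}) : {set {perm V}} :=
  [set g in aut_set e | [forall s in S, g s == s]].

Definition fixing_number (V : finType) (e : rel V) (k : nat) : Prop :=
  (exists S : {set V}, stab e S = 1 /\ #|S| = k) /\
  (forall S : {set V}, stab e S = 1 -> k <= #|S|).

Definition fix_set (gT : finGroupType) (G : {group gT}) (k : nat) : Prop :=
  exists (V : finType) (e : rel V),
    simple_graph e /\ aut_group e \isog G /\ fixing_number e k.

Definition hamiltonian (gT : finGroupType) (H : {group gT}) : Prop :=
  ~~ abelian H /\ forall K : {group gT}, K \subset H -> K <| H.

Definition num_elementary_divisors (gT : finGroupType) (A : {group gT})
    (d : nat) : Prop :=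
  exists C : 'I_d -> {group gT},
    \big[dprod/1]_(i < d) C i = A /\
    forall i, cyclic (C i) /\ exists p k, prime p /\ #|C i| = (p ^ k.+1)%N.

(* Main.v *)
Require Import Defs.
From mathcomp Require Import all_boot all_fingroup all_solvable.
Set Implicit Arguments. Unset Strict Implicit. Unset Printing Implicit Defensive.
Local Open Scope group_scope.

Lemma prime_seq_size (l1 l2 : seq nat) : all prime l1 -> all prime l2 ->
  (\prod_(p <- l1) p %| \prod_(p <- l2) p)%N -> size l1 <= size l2.
Proof.
elim: l1 l2 => [|p l1 IH] l2 //= /andP[pp pl1] pl2; rewrite big_cons => dv.
have pl: p \in l2.
  have: (p %| \prod_(q <- l2) q)%N by apply: dvdn_trans dv; apply: dvdn_mulr.
  rewrite Euclid_dvd_prod // big_has => /hasP[q ql2 /=].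
  by rewrite dvdn_prime2 // ?(allP pl2) // => /eqP->.
have pe := perm_to_rem pl.
rewrite (perm_big _ pe) big_cons in dv.
rewrite (perm_size pe) /= ltnS; apply: IH => //.
  by apply/allP=> q /mem_rem; apply: (allP pl2).
by rewrite dvdn_pmul2l ?prime_gt0 in dv.
Qed.

Lemma stabP (V : finType) (e : rel V) (T : {set V}) g :
  reflect (g \in aut_set e /\ forall s, s \in T -> g s = s) (g \in stab e T).
Proof.
rewrite /stab in_set; apply: (iffP andP) => [[A /forall_inP F]|[A F]]; split=> //.
  by move=> s /F/eqP.
by apply/forall_inP=> s /F->.
Qed.

Lemma stab_group_set (V : finType) (e : rel V) (T : {set V}) :
  group_set (stab e T).
Proof.
apply/group_setP; split.
  by apply/stabP; split; [exact: (group1 (aut_group e)) | move=> s _; rewrite perm1].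
move=> g h /stabP[Ag Fg] /stabP[Ah Fh]; apply/stabP; split.
  exact: (groupM (G:=aut_group e)).
by move=> s sT; rewrite permM Fg ?Fh.
Qed.

Canonical stab_group (V : finType) (e : rel V) (T : {set V}) :=
  Group (stab_group_set e T).

Lemma stab_sub (V : finType) (e : rel V) (T : {set V}) :
  stab e T \subset aut_group e.
Proof. by apply/subsetP=> g; rewrite inE => /andP[]. Qed.


Lemma gen_U2 (gT : finGroupType) (A B : {set gT}) :
  << <<A>> :|: <<B>> >> = <<A :|: B>>.
Proof.
apply/eqP; rewrite eqEsubset !gen_subG !subUset !gen_subG.
have sA : A \subset <<A :|: B>> := sub_gen (subsetUl A B).
have sB : B \subset <<A :|: B>> := sub_gen (subsetUr A B).
have sA' : A \subset << <<A>> :|: <<B>> >> :=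
  sub_gen (subset_trans (subset_gen A) (subsetUl _ _)).
have sB' : B \subset << <<A>> :|: <<B>> >> :=
  sub_gen (subset_trans (subset_gen B) (subsetUr _ _)).
by rewrite sA sB sA' sB'.
Qed.

Lemma upper_bound (gT : finGroupType) (H : {group gT}) (V : finType) (e : rel V)
    (k : nat) (ps : seq nat) :
  aut_group e \isog H -> (forall K : {group gT}, K \subset H -> K <| H) ->
  all prime ps -> #|'Ohm_1(H)| = (\prod_(p <- ps) p)%N ->
  fixing_number e k -> k <= size ps.
Proof.
move=> isoAH hamH pps oOhm [[S0 [stS0 cS0]] minS].
have [f injf imf] := isogP isoAH.
have exy : forall s, s \in S0 ->
    exists y, [&& y \in stab e (S0 :\ s), prime #[y] & y s != s].
  move=> s sS.
  have ntr : stab_group e (S0 :\ s) != 1 :> {set _}.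
    apply/eqP => st1; have := minS _ st1.
    by rewrite -cS0 (cardsD1 s S0) sS add1n ltnn.
  have [st1|[p pp pdv]] := trivgVpdiv (stab_group e (S0 :\ s)).
    by move: ntr; rewrite st1 /= eqxx.
  have [y Sy oy] := Cauchy pp pdv.
  exists y; rewrite Sy oy pp /=; apply/negP => /eqP ys.
  have : y \in stab e S0.
    move/stabP: Sy => [Ay Fy]; apply/stabP; split=> // t tS.
    have [->//|nts] := eqVneq t s.
    by apply: Fy; rewrite !inE nts.
  by rewrite stS0 => /set1P yone; move: pp; rewrite -oy yone order1.
pose P s y := [&& y \in stab e (S0 :\ s), prime #[y] & y s != s].
pose z s := odflt 1 [pick y | P s y].
have zP : forall s, s \in S0 -> P s (z s).
  move=> s sS; rewrite /z; case: pickP => [y //|none].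
  by have [y] := exy s sS; rewrite -/(P s y) none.
have zQ : forall s, s \in S0 ->
    [/\ z s \in stab e (S0 :\ s), prime #[z s] & z s s != s].
  by move=> s sS; apply/and3P; exact: zP.
pose w s := f (z s).
have zA : forall s, s \in S0 -> z s \in aut_group e.
  move=> s /zQ [zs _ _]; exact: (subsetP (stab_sub e (S0 :\ s)) _ zs).
have wH : forall s, s \in S0 -> w s \in H.
  by move=> s sS; rewrite -imf mem_morphim ?zA.
have ow : forall s, s \in S0 -> #[w s] = #[z s].
  by move=> s sS; rewrite /w order_injm ?zA.
have pw : forall s, s \in S0 -> prime #[w s].
  by move=> s sS; rewrite ow //; case: (zQ s sS).
pose Cs s := f @* (stab_group e [set s]).
have wC : forall s t, s \in S0 -> t \in S0 -> t != s -> w t \in Cs s.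
  move=> s t sS tS nts; rewrite /Cs mem_morphim ?zA //.
  case: (zQ t tS) => /stabP[At Ft] _ _.
  apply/stabP; split=> // x /set1P ->; apply: Ft.
  by rewrite !inE eq_sym nts.
have wnC : forall s, s \in S0 -> w s \notin Cs s.
  move=> s sS; apply/negP => wCs.
  have : z s \in f @*^-1 (Cs s) by rewrite mem_morphpre ?zA.
  rewrite /Cs injmK ?stab_sub // => /stabP[_ F].
  by case: (zQ s sS) => _ _; rewrite F ?set11 ?eqxx.
pose X (r : seq V) := [set w t | t in r].
have Xcons : forall s r, X (s :: r) = w s |: X r.
  move=> s r; apply/setP=> x; rewrite !inE; apply/imsetP/orP.
    case=> t; rewrite inE => /orP[/eqP->|tr] ->; first by left.
    by right; apply/imsetP; exists t.
  case=> [/eqP->|/imsetP[t tr ->]]; first by exists s; rewrite ?inE ?eqxx.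
  by exists t; rewrite // inE tr orbT.
have cardX : forall r, uniq r -> {subset r <= S0} ->
    #|<<X r>>| = (\prod_(t <- r) #[w t])%N.
  elim=> [|s r IH] /=.
    move=> _ _; rewrite big_nil.
    have -> : X [::] = set0 by apply/setP=> x; rewrite inE; apply/imsetP; case.
    by rewrite gen0 cards1.
  move=> /andP[sr ur] sub.
  have sS : s \in S0 by apply: sub; rewrite inE eqxx.
  have sub' : {subset r <= S0} by move=> t tr; apply: sub; rewrite inE tr orbT.
  have XC : <<X r>> \subset Cs s.
    rewrite gen_subG; apply/subsetP=> x /imsetP[t tr ->].
    apply: wC => //; first exact: sub'.
    by apply: contraNneq sr => <-.
  have XH : <<X r>> \subset H.
    rewrite gen_subG; apply/subsetP=> x /imsetP[t tr ->]; exact/wH/sub'.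
  have nX : <<X r>> \subset 'N(<[w s]>).
    apply: subset_trans XH _.
    have nsw : <[w s]> <| H by apply: hamH; rewrite cycle_subG wH.
    by case/andP: nsw.
  rewrite Xcons big_cons.
  have -> : <<w s |: X r>> = (<<X r>> * <[w s]>)%g.
    rewrite -norm_joinEl // /joing /cycle; apply: etrans (esym (gen_U2 _ _)); congr <<_>>; exact: setUC.
  rewrite (TI_cardMg (G:=<<X r>>%G) (H:=<[w s]>%G)); last first.
    rewrite setIC prime_TIg -?orderE ?pw // cycle_subG.
    by apply: contra (wnC s sS); apply: (subsetP XC).
  by rewrite IH // -orderE mulnC.
have XO : <<X (enum S0)>> \subset 'Ohm_1(H).
  rewrite gen_subG; apply/subsetP=> x /imsetP[t]; rewrite mem_enum => tS ->.
  apply: mem_gen; rewrite inE wH //= pdiv_id ?pw // expn1 expg_order eqxx.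
  by [].
have := cardSg XO; rewrite cardX ?enum_uniq // => [|t]; last by rewrite mem_enum.
rewrite oOhm -(big_map (fun t => #[w t]) xpredT id) => dv.
have := prime_seq_size _ pps dv; rewrite size_map -cardE cS0; apply.
by apply/allP=> x /mapP[t]; rewrite mem_enum => tS ->; apply: pw.
Qed.

Lemma ohm_bigdprod (gT : finGroupType) (d : nat) (C : 'I_d -> {group gT})
    (A : {group gT}) :
  \big[dprod/1]_(i < d) C i = A ->
  (forall i, cyclic (C i) /\ exists p k, prime p /\ #|C i| = (p ^ k.+1)%N) ->
  exists ps, [/\ all prime ps, size ps = d & #|'Ohm_1(A)| = (\prod_(p <- ps) p)%N].
Proof.
elim: d C A => [|d IH] C A.
  rewrite big_ord0 => A1 _; exists [::]; split=> //.
  have -> : A = 1%G by apply/val_inj; rewrite /= -A1.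
  by rewrite big_nil; apply/eqP; rewrite -trivg_card1 -subG1 Ohm_sub.
rewrite big_ord_recr /= => defA hC.
case/dprodP: (defA) => [[G1 G2 defG1 defG2]] _ _ _.
have [ps [pps sps ops]] := IH (fun i => C (widen_ord (leqnSn d) i)) G1 defG1
  (fun i => hC _).
have [cyc [p [k [pp oC]]]] := hC ord_max.
have pC : p.-group (C ord_max) by rewrite /pgroup oC pnatX pnat_id.
have ntC : C ord_max :!=: 1.
  by rewrite -cardG_gt1 oC expnS (leq_trans (prime_gt1 pp)) // leq_pmulr // expn_gt0 prime_gt0.
have oOC := Ohm1_cyclic_pgroup_prime cyc pC ntC.
exists (rcons ps p); split.
- by rewrite all_rcons pp.
- by rewrite size_rcons sps.
rewrite defG1 in defA.
have := Ohm_dprod 1 defA => /dprod_card <-.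
by rewrite ops oOC -cats1 big_cat big_seq1.
Qed.

Lemma ohm_H (gT : finGroupType) (H Q A : {group gT}) (d : nat) :
  Q \x A = H -> Q \isog 'Q_8 -> num_elementary_divisors A d ->
  exists ps, [/\ all prime ps, size ps = d.+1 & #|'Ohm_1(H)| = (\prod_(p <- ps) p)%N].
Proof.
move=> defH isoQ [C [defA hC]].
have [ps [pps sps ops]] := ohm_bigdprod defA hC.
have oQ : #|Q| = 8%N by rewrite (card_isog isoQ) (card_quaternion (n:=3)).
have pQ : 2.-group Q by rewrite /pgroup oQ.
have ntQ : Q :!=: 1 by rewrite -cardG_gt1 oQ.
have oOQ : #|'Ohm_1(Q)| = 2%N.
  apply/(prime_Ohm1P pQ ntQ); apply/orP; right; apply/andP; split=> //.
  by apply/eqP/quaternion_classP; exists 3.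
exists (2 :: ps); split=> //.
- by rewrite /= sps.
have := Ohm_dprod 1 defH => /dprod_card <-.
by rewrite oOQ ops big_cons.
Qed.


Definition nsys (gT : finGroupType) (G : {group gT}) (k : nat)
    (N : 'I_k -> {group gT}) : Prop :=
  [/\ forall j, N j \subset G,
      forall x, x \in G -> (forall j, x \in N j) -> x = 1,
      forall j0, exists2 x, x \in G & (x != 1) /\ (forall j, j != j0 -> x \in N j)
    & (\prod_(j < k) #|G : N j|)%N = #|G| ].

Lemma nsys_base (gT : finGroupType) (G : {group gT}) :
  G :!=: 1 -> nsys G (fun _ : 'I_1 => 1%G).
Proof.
move=> ntG; split=> //.
- by move=> j; apply: sub1G.
- by move=> x _ /(_ ord0) /set1P.
- move=> j0; have [x Gx ntx] := trivgPn _ ntG.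
  exists x => //; split=> // j; by rewrite (ord1 j) (ord1 j0) eqxx.
- by rewrite big_ord1 indexg1.
Qed.

Section Ext.
Variables (gT : finGroupType) (G' C G : {group gT}).
Hypothesis defG : G' \x C = G.
Hypothesis ntC : C :!=: 1.

Lemma ext_facts :
  [/\ G' \subset G, C \subset G, C \subset 'C(G') & G' :&: C = 1].
Proof.
have [_ defM cC tI] := dprodP defG.
by rewrite -defM mulG_subl mulG_subr.
Qed.

Lemma ext_join (N : {group gT}) : N \subset G' -> N <*> C = N * C.
Proof.
move=> sN; have [_ _ cC _] := ext_facts.
by rewrite cent_joinEr // (subset_trans cC) ?centS.
Qed.

Lemma ext_mem (N : {group gT}) x :
  N \subset G' -> (x \in (N <*> C)%G) = (x \in N * C).
Proof. by move=> sN; rewrite -(ext_join sN). Qed.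

Lemma ext_dedekind (N : {group gT}) x :
  N \subset G' -> x \in G' -> x \in (N <*> C)%G -> x \in N.
Proof.
move=> sN xG; rewrite ext_mem // => /mulsgP[n c nN cC xnc]; subst x.
have [_ _ _ tI] := ext_facts.
have nG : n \in G' := subsetP sN n nN.
have cG' : c \in G' by rewrite -(mulKg n c) groupM ?groupV.

have : c \in G' :&: C by rewrite inE cG' cC.
by rewrite tI => /set1P->; rewrite mulg1.
Qed.

Lemma ext_sub (N : {group gT}) : N \subset G' -> (N <*> C)%G \subset G.
Proof.
move=> sN; have [sG' sC _ _] := ext_facts.
by rewrite /= join_subG (subset_trans sN sG') sC.
Qed.

Lemma ext_index (N : {group gT}) :
  N \subset G' -> #|G : (N <*> C)%G| = #|G' : N|.
Proof.
move=> sN; have [_ _ _ tI] := ext_facts.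
have tNC : N :&: C = 1.
  by apply/trivgP; rewrite -tI setSI.
have oNC : #|(N <*> C)%G| = (#|N| * #|C|)%N by rewrite /= ext_join // TI_cardMg.
have := Lagrange (ext_sub sN); rewrite oNC -(dprod_card defG).
rewrite -(Lagrange sN) => E.
have := cardG_gt0 N; have := cardG_gt0 C; move: E.
set a := #|G : _|; set b := #|G' : N|; set n := #|N|; set c := #|C|.
move=> E c0 n0; apply/eqP; rewrite -(eqn_pmul2l c0) -(eqn_pmul2l n0); apply/eqP.
by rewrite mulnA E mulnAC mulnA.
Qed.

Lemma ext_index_max (N : {group gT}) :
  N \subset G' -> #|G : N| = (#|G' : N| * #|C|)%N.
Proof.
move=> sN; have [sG' _ _ _] := ext_facts.
have := Lagrange (subset_trans sN sG'); rewrite -(dprod_card defG) -(Lagrange sN).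
by rewrite -mulnA => /eqP; rewrite eqn_pmul2l ?cardG_gt0 // => /eqP.
Qed.

Lemma nsys_ext0 k (N : 'I_k.+1 -> {group gT}) :
  nsys G' N ->
  nsys G (fun j => if j == ord_max then N j else (N j <*> C)%G).
Proof.
case=> sN triv irr prd; have [sG' sC _ tI] := ext_facts.
have [c Cc ntc] := trivgPn _ ntC.
split.
- move=> j; case: eqP => _; first exact: subset_trans (sN j) sG'.
  exact: ext_sub.
- move=> x Gx xN; have xG' : x \in G'.
    by have := xN ord_max; rewrite eqxx => /(subsetP (sN _)).
  apply: triv => // j; have := xN j; case: eqP => [-> //|_].
  exact: ext_dedekind.
- move=> j0; have [->|nj0] := eqVneq j0 ord_max.
    exists c; first exact: (subsetP sC).
    split=> // j nj; rewrite ifN //.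
    by rewrite ext_mem ?sN // -[c]mul1g mem_mulg.
  have [x xG [ntx xN]] := irr j0.
  exists x; first exact: (subsetP sG').
  split=> // j nj; have xNj := xN j nj; case: eqP => // _.
  by rewrite ext_mem ?sN // -[x]mulg1 mem_mulg.
- rewrite (bigD1 ord_max) //= eqxx ext_index_max // -(dprod_card defG) -prd.
  rewrite [in RHS](bigD1 ord_max) //= [RHS]mulnAC; congr (_ * _)%N.
  by apply: eq_bigr => j /negPf ->; rewrite ext_index.
Qed.

Lemma nsys_ext1 k (N : 'I_k -> {group gT}) :
  nsys G' N ->
  nsys G (fun j : 'I_k.+1 => if unlift ord_max j is Some i then (N i <*> C)%G else G').
Proof.
case=> sN triv irr prd; have [sG' sC _ tI] := ext_facts.
have [c Cc ntc] := trivgPn _ ntC.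
split.
- by move=> j; case: unliftP => [i _|_]; [exact: ext_sub | exact: sG'].
- move=> x Gx xN; have xG' : x \in G'.
    by have := xN ord_max; rewrite unlift_none.
  apply: triv => // i; have := xN (lift ord_max i); rewrite liftK.
  exact: ext_dedekind.
- move=> j0; case: (unliftP ord_max j0) => [i0 ->|->].
    have [x xG [ntx xN]] := irr i0.
    exists x; first exact: (subsetP sG').
    split=> // j; case: unliftP => [i -> nj|//].
    have ni : i != i0 by apply: contraNneq nj => ->.
    by rewrite ext_mem ?sN // -[x]mulg1 mem_mulg ?xN.
  exists c; first exact: (subsetP sC).
  split=> // j; case: unliftP => [i -> _|->]; last by rewrite eqxx.
  by rewrite ext_mem ?sN // -[c]mul1g mem_mulg.
- rewrite big_ord_recr /= unlift_none -(index_sdprod (dprodWsd defG)).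
  rewrite -(dprod_card defG) -prd; congr (_ * _)%N.
  apply: eq_bigr => i _.
  have -> : widen_ord (leqnSn k) i = lift ord_max i.
    by apply: val_inj; rewrite /= /bump leqNgt ltn_ord.
  by rewrite liftK ext_index.
Qed.

End Ext.

Lemma nsys_exists (gT : finGroupType) (Q : {group gT}) : Q :!=: 1 ->
  forall d (C : 'I_d -> {group gT}) (A H : {group gT}),
  Q \x A = H -> \big[dprod/1]_(i < d) C i = A -> (forall i, C i :!=: 1) ->
  forall k, 0 < k <= d.+1 -> exists N : 'I_k -> {group gT}, nsys H N.
Proof.
move=> ntQ; elim=> [|d IH] C A H defH defA ntC k /andP[k1 kd].
  have k1' : k = 1%N by apply/eqP; rewrite eqn_leq kd k1.
  subst k.
  have -> : H = Q.
    by apply: val_inj; rewrite /= -defH -defA big_ord0 dprodg1.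
  by exists (fun _ => 1%G); apply: nsys_base.
rewrite big_ord_recr /= in defA.
case/dprodP: (defA) => [[G1 G2 defG1 defG2]] _ _ _.
rewrite defG1 in defA.
rewrite -defA dprodA in defH.
case/dprodP: (defH) => [[H1 H2 defH1 defH2]] _ _ _.
rewrite defH1 in defH.
have ntCm : C ord_max :!=: 1 := ntC ord_max.
case: k k1 kd => [//|[|k]] _ kd.
  have [N sN] := IH _ G1 H1 defH1 defG1 (fun i => ntC _) 1%N (erefl _).
  by eexists; apply: (nsys_ext0 defH ntCm sN).
have [N sN] := IH _ G1 H1 defH1 defG1 (fun i => ntC _) k.+1 kd.
by eexists; apply: (nsys_ext1 defH ntCm sN).
Qed.


Section Coset.
Variables (gT : finGroupType) (H N : {group gT}).
Hypothesis nNH : N <| H.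

Lemma coset_norm y : y \in H -> y \in 'N(N).
Proof. by move=> yH; case/andP: nNH => _ /subsetP; apply. Qed.

Lemma cos_div u v : u \in H -> v \in H ->
  (N :* u) * (N :* v)^-1 = N :* (u * v^-1).
Proof.
move=> uH vH; rewrite invg_rcoset -norm_rlcoset ?groupV ?coset_norm //.
by rewrite rcoset_mul // coset_norm.
Qed.

Lemma cos_mul u v : u \in H -> v \in H -> (N :* u) * (N :* v) = N :* (u * v).
Proof. by move=> uH vH; rewrite rcoset_mul // coset_norm. Qed.

Lemma cos_fix u h : u \in H -> h \in N -> N :* u :* h = N :* u.
Proof.
move=> uH hN; rewrite -rcosetM; apply/rcoset_eqP.
rewrite mem_rcoset.
by move: hN; rewrite -(memJ_norm h (coset_norm (groupVr uH))) conjgE invgK mulgA.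
Qed.

Lemma cos_eq u v : N :* u = N :* v -> u * v^-1 \in N.
Proof. by move=> E; rewrite -mem_rcoset -E rcoset_refl. Qed.

End Coset.

Section Graph.
Variables (gT : finGroupType) (H : {group gT}) (k : nat) (N : 'I_k -> {group gT}).
Hypothesis nN : forall j, N j <| H.

Definition Mv := {p : 'I_k * {set gT} | p.2 \in rcosets (N p.1) H}.
Definition blk (x : Mv) : 'I_k := (val x).1.
Definition cs (x : Mv) : {set gT} := (val x).2.
Definition CT := ('I_k * {set gT})%type.
Definition col (x y : Mv) : CT := (blk x, cs x * (cs y)^-1).
Definition rk (a : Mv * Mv) : nat := enum_rank (col a.1 a.2).
Definition PP := #|{: CT}|.+3.
Definition gvP (q : (Mv * Mv) * 'I_PP) :=
  (blk q.1.1 == blk q.1.2) && (q.2 < (rk q.1).+3).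
Definition Gv := {q : (Mv * Mv) * 'I_PP | gvP q}.
Definition arc (g : Gv) : Mv * Mv := (val g).1.
Definition idx (g : Gv) : nat := (val g).2.
Definition V := (Mv + Gv)%type.

Definition iadj (i j : nat) : bool :=
  [|| (i == 0%N) && ((j == 1%N) || (j == 2%N)),
      (j == 0%N) && ((i == 1%N) || (i == 2%N)),
      (2 <= i)%N && (j == i.+1) | (2 <= j)%N && (i == j.+1)].

Definition gadj (x : Mv) (g : Gv) : bool :=
  ((idx g == 0%N) && ((arc g).1 == x)) || ((idx g == 1%N) && ((arc g).2 == x)).

Definition gedge (u v : V) : bool :=
  match u, v with
  | inl _, inl _ => false
  | inl x, inr g => gadj x g
  | inr g, inl x => gadj x g
  | inr g, inr g' => (arc g == arc g') && iadj (idx g) (idx g')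
  end.

Lemma iadj_sym i j : iadj i j = iadj j i.
Proof.
by apply/or4P/or4P => -[] E; [apply: Or42|apply: Or41|apply: Or44|apply: Or43
  |apply: Or42|apply: Or41|apply: Or44|apply: Or43].
Qed.

Lemma ge_sym : symmetric gedge.
Proof. by move=> [x|g] [y|g'] //=; rewrite eq_sym iadj_sym. Qed.

Lemma ge_irr : irreflexive gedge.
Proof.
move=> [x|g] //=; rewrite eqxx /iadj /=.
by case: (idx g) => [|[|[|i]]] //=; rewrite ?ltnn ?eqn_leq ?ltnn ?andbF.
Qed.

Lemma idx_lt (g : Gv) : idx g < (rk (arc g)).+3.
Proof. by have /andP[] := valP g. Qed.

Lemma blk_arc (g : Gv) : blk (arc g).1 = blk (arc g).2.
Proof. by have /andP[/eqP] := valP g. Qed.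

Lemma gv_eq (g g' : Gv) : arc g = arc g' -> idx g = idx g' -> g = g'.
Proof.
case: g g' => [[a i] Pg] [[a' i'] Pg']; rewrite /arc /idx /= => ea ei.
by apply: val_inj => /=; rewrite ea (ord_inj ei).
Qed.

Lemma rk_lt a : (rk a).+3 <= PP.
Proof. by rewrite /PP !ltnS ltnW // /rk ltn_ord. Qed.

Lemma gex (a : Mv * Mv) (i : nat) : blk a.1 = blk a.2 -> i < (rk a).+3 ->
  {g : Gv | arc g = a /\ idx g = i}.
Proof.
move=> ba ir.
have iP : i < PP by apply: leq_trans ir (rk_lt a).
have P : gvP (a, Ordinal iP) by rewrite /gvP /= ba eqxx ir.
by exists (Sub (a, Ordinal iP) P).
Qed.


Definition hH (h : gT) : gT := if h \in H then h else 1.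
Lemma hH_in h : hH h \in H.
Proof. by rewrite /hH; case: ifP. Qed.
Lemma hH_id h : h \in H -> hH h = h.
Proof. by rewrite /hH => ->. Qed.

Lemma cs_rep (x : Mv) : exists2 y, y \in H & cs x = N (blk x) :* y.
Proof. by have /rcosetsP := valP x. Qed.

Lemma mmul_proof (x : Mv) h :
  ((blk x, cs x :* hH h) : 'I_k * {set gT}).2 \in
     rcosets (N (blk x, cs x :* hH h).1) H.
Proof.
have [y yH ->] := cs_rep x; apply/rcosetsP; exists (y * hH h).
  by rewrite groupM ?hH_in.
by rewrite rcosetM.
Qed.

Definition mmul h (x : Mv) : Mv := Sub (blk x, cs x :* hH h) (mmul_proof x h).

Lemma blk_mmul h x : blk (mmul h x) = blk x. Proof. by []. Qed.
Lemma cs_mmul h x : cs (mmul h x) = cs x :* hH h. Proof. by []. Qed.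

Lemma mv_eq (x y : Mv) : blk x = blk y -> cs x = cs y -> x = y.
Proof.
move=> eb ec; apply: val_inj; move: eb ec; rewrite /blk /cs.
by case: (val x) (val y) => [a b] [c d] /= -> ->.
Qed.

Lemma mmul_inj h : injective (mmul h).
Proof.
move=> x y E; apply: mv_eq; first by rewrite -(blk_mmul h x) E.
by rewrite -(rcosetK (hH h) (cs x)) -cs_mmul E cs_mmul rcosetK.
Qed.

Lemma col_mmul h (x y : Mv) : blk x = blk y ->
  col (mmul h x) (mmul h y) = col x y.
Proof.
move=> bxy; rewrite /col blk_mmul !cs_mmul; congr pair.
have [u uH ->] := cs_rep x; have [v vH ->] := cs_rep y; rewrite -bxy.
rewrite -!rcosetM !(cos_div (nN _)) ?groupM ?hH_in //.
by rewrite invMg mulgA mulgK.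
Qed.

Lemma rk_mmul h (a : Mv * Mv) : blk a.1 = blk a.2 ->
  rk (mmul h a.1, mmul h a.2) = rk a.
Proof. by move=> ba; rewrite /rk /= col_mmul. Qed.

Lemma gmul_proof (g : Gv) h :
  gvP ((mmul h (arc g).1, mmul h (arc g).2), (val g).2).
Proof.
rewrite /gvP /= !blk_mmul rk_mmul ?blk_arc // eqxx /=.
exact: idx_lt.
Qed.

Definition gmul h (g : Gv) : Gv := Sub _ (gmul_proof g h).
Lemma arc_gmul h g : arc (gmul h g) = (mmul h (arc g).1, mmul h (arc g).2).
Proof. by []. Qed.
Lemma idx_gmul h g : idx (gmul h g) = idx g.
Proof. by []. Qed.

Lemma gmul_inj h : injective (gmul h).
Proof.
move=> g g' E; apply: gv_eq; last by rewrite -(idx_gmul h g) E.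
have E1 : mmul h (arc g).1 = mmul h (arc g').1 := congr1 (fun g => (arc g).1) E.
have E2 : mmul h (arc g).2 = mmul h (arc g').2 := congr1 (fun g => (arc g).2) E.
have e1 := mmul_inj E1; have e2 := mmul_inj E2.
by move: e1 e2; case: (arc g) (arc g') => [? ?] [? ?] /= -> ->.
Qed.

Definition vmul h (v : V) : V :=
  match v with inl x => inl (mmul h x) | inr g => inr (gmul h g) end.

Lemma vmul_inj h : injective (vmul h).
Proof.
move=> [x|g] [y|g'] //= E.
  have E' := congr1 (fun v => if v is inl z then z else mmul h x) E.
  by rewrite (mmul_inj E').
have E' := congr1 (fun v => if v is inr z then z else gmul h g) E.
by rewrite (gmul_inj E').
Qed.

Definition phi (h : gT) : {perm V} := perm (@vmul_inj h).

Lemma phiE h v : phi h v = vmul h v.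
Proof. by rewrite permE. Qed.

Lemma mmulM h1 h2 x : h1 \in H -> h2 \in H ->
  mmul (h1 * h2) x = mmul h2 (mmul h1 x).
Proof.
move=> h1H h2H; apply: mv_eq => //.
by rewrite !cs_mmul !hH_id ?groupM // rcosetM.
Qed.

Lemma vmulM h1 h2 v : h1 \in H -> h2 \in H ->
  vmul (h1 * h2) v = vmul h2 (vmul h1 v).
Proof.
move=> h1H h2H; case: v => [x|g] /=; first by rewrite mmulM.
congr inr; apply: gv_eq => //.
by rewrite !arc_gmul /= !mmulM.
Qed.

Lemma phi_morph : {in H &, {morph phi : x y / x * y}}.
Proof.
move=> h1 h2 h1H h2H; apply/permP => v.
by rewrite permM !phiE vmulM.
Qed.

Canonical phim := Morphism phi_morph.

Lemma gadj_mul h x g : gadj (mmul h x) (gmul h g) = gadj x g.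
Proof. by rewrite /gadj idx_gmul arc_gmul /= !(inj_eq (@mmul_inj h)). Qed.

Lemma phi_aut h : phi h \in aut_set gedge.
Proof.
rewrite inE; apply/forallP => u; apply/forallP => v; rewrite !phiE.
case: u v => [x|g] [y|g'] //=; rewrite ?gadj_mul //.
rewrite !idx_gmul !arc_gmul !xpair_eqE !(inj_eq (@mmul_inj h)).
by rewrite -xpair_eqE; case: (arc g) (arc g').
Qed.


Definition deg (v : V) := #|[set w | gedge v w]|.

Lemma deg_aut (s : {perm V}) v : s \in aut_set gedge -> deg (s v) = deg v.
Proof.
rewrite inE => /forallP A; rewrite /deg -(card_preimset _ (@perm_inj _ s)).
by apply: eq_card => w; rewrite !inE (eqP (forallP (A v) w)).
Qed.

Definition mkv (a : Mv * Mv) (i : nat) : V :=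
  if (insub (a, inord i) : option Gv) is Some g then inr g else inl a.1.

Lemma mkvE (g : Gv) a i : arc g = a -> idx g = i -> mkv a i = inr g.
Proof.
move=> <- <-; rewrite /mkv.
have -> : (arc g, inord (idx g)) = val g.
  by rewrite /arc /idx; case: (val g) => b j /=; rewrite inord_val.
by rewrite valK.
Qed.

Lemma gex_mkv (a : Mv * Mv) (i : nat) : blk a.1 = blk a.2 -> i < (rk a).+3 ->
  exists g : Gv, [/\ arc g = a, idx g = i & mkv a i = inr g].
Proof.
move=> ba ir; have [g [ag ig]] := gex ba ir.
by exists g; split=> //; apply: mkvE.
Qed.

Lemma cards3_le (T : finType) (a b c : T) : #|[set a; b; c]| <= 3.
Proof.
rewrite -setUA; apply: leq_trans (leq_card_setU _ _) _.
by rewrite cards1 cards2; case: (_ != _).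
Qed.

Lemma cards2_le (T : finType) (a b : T) : #|[set a; b]| <= 2.
Proof. by rewrite cards2; case: (_ != _). Qed.

Lemma ge_inl_inr x g : gedge (inr g) (inl x) = gadj x g.
Proof. by []. Qed.

Lemma ge_inr_inr g g' : gedge (inr g) (inr g') = (arc g == arc g') && iadj (idx g) (idx g').
Proof. by []. Qed.

Lemma iadj0 j : iadj 0 j = (j == 1%N) || (j == 2%N).
Proof. by rewrite /iadj; case: j => [|[|[|j]]]. Qed.

Lemma iadj1 j : iadj 1 j = (j == 0%N).
Proof. by rewrite /iadj; case: j => [|[|[|j]]]. Qed.

Lemma deg0_le g : idx g = 0%N -> deg (inr g) <= 3.
Proof.
move=> i0; apply: leq_trans (cards3_le (inl (arc g).1) (mkv (arc g) 1) (mkv (arc g) 2)).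
apply: subset_leq_card; apply/subsetP => w; rewrite !inE; case: w => [y|g'].
  by rewrite ge_inl_inr /gadj i0 /= ?orbF => /eqP->; rewrite eqxx.
rewrite ge_inr_inr i0 iadj0 => /andP[/eqP ea /orP[] /eqP ii].
- by rewrite (mkvE (esym ea) ii) eqxx ?orbT.
- by rewrite (mkvE (esym ea) ii) eqxx ?orbT.
Qed.

Lemma deg0_ge g : idx g = 0%N -> 3 <= deg (inr g).
Proof.
move=> i0; have ba := blk_arc g; have rk3 := idx_lt g.
have [g1 [a1 i1 _]] := gex_mkv ba (isT : 1 < (rk (arc g)).+3).
have [g2 [a2 i2 _]] := gex_mkv ba (isT : 2 < (rk (arc g)).+3).
have sub : [set inl (arc g).1; inr g1; inr g2] \subset [set w | gedge (inr g) w].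
  apply/subsetP => w; rewrite !inE => /orP[/orP[]|] /eqP->.
  - by rewrite ge_inl_inr /gadj i0 !eqxx.
  - by rewrite ge_inr_inr a1 eqxx i0 i1 iadj0.
  - by rewrite ge_inr_inr a2 eqxx i0 i2 iadj0.
apply: leq_trans (subset_leq_card sub).
rewrite -setUA cardsU1 cards2 !inE /=.
have n12 : inr g1 != inr g2 :> V.
  by apply/eqP => -[] E; move: i1; rewrite E i2.
by rewrite n12.
Qed.

Lemma deg1_le g : idx g = 1%N -> deg (inr g) <= 2.
Proof.
move=> i1; apply: leq_trans (cards2_le (inl (arc g).2) (mkv (arc g) 0)).
apply: subset_leq_card; apply/subsetP => w; rewrite !inE; case: w => [y|g'].
  by rewrite ge_inl_inr /gadj i1 /= ?orbF => /eqP->; rewrite eqxx.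
rewrite ge_inr_inr i1 iadj1 => /andP[/eqP ea /eqP ii].
by rewrite (mkvE (esym ea) ii) eqxx ?orbT.
Qed.

Definition prv (i : nat) : nat := if i == 2%N then 0%N else i.-1.

Lemma iadj_ge2 i j : 2 <= i -> iadj i j = (j == i.+1) || (j == prv i).
Proof.
move=> i2; rewrite /iadj /prv.
case: i i2 => [|[|[|i]]] // _.
  by case: j => [|[|[|j]]].
case: j => [|[|j]] //=; rewrite ?orbF //.
by rewrite !eqSS [(i == j)%N]eq_sym.
Qed.

Lemma ge2_noinl g x : 2 <= idx g -> gedge (inr g) (inl x) = false.
Proof.
by move=> i2; rewrite ge_inl_inr /gadj; case: (idx g) i2 => [|[|i]].
Qed.

Lemma deg_ge2_le g : 2 <= idx g -> deg (inr g) <= 2.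
Proof.
move=> i2; apply: leq_trans (cards2_le (mkv (arc g) (idx g).+1) (mkv (arc g) (prv (idx g)))).
apply: subset_leq_card; apply/subsetP => w; rewrite !inE; case: w => [y|g'].
  by rewrite ge2_noinl.
rewrite ge_inr_inr iadj_ge2 // => /andP[/eqP ea /orP[] /eqP ii].
- by rewrite (mkvE (esym ea) ii) eqxx ?orbT.
- by rewrite (mkvE (esym ea) ii) eqxx ?orbT.
Qed.

Lemma prv_lt i : 2 <= i -> prv i < i.
Proof. by rewrite /prv; case: i => [|[|[|i]]]. Qed.

Lemma deg_last g : 2 <= idx g -> idx g = (rk (arc g)).+2 -> deg (inr g) <= 1.
Proof.
move=> i2 il; apply: leq_trans (_ : #|[set mkv (arc g) (prv (idx g))]| <= 1); last first.
  by rewrite cards1.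
apply: subset_leq_card; apply/subsetP => w; rewrite !inE; case: w => [y|g'].
  by rewrite ge2_noinl.
rewrite ge_inr_inr iadj_ge2 // => /andP[/eqP ea /orP[] /eqP ii].
- by have := idx_lt g'; rewrite ii il -ea ltnn.
- by rewrite (mkvE (esym ea) ii) eqxx.
Qed.

Lemma deg_mid g : 2 <= idx g -> (idx g).+1 < (rk (arc g)).+3 -> 2 <= deg (inr g).
Proof.
move=> i2 il; have ba := blk_arc g.
have [g1 [a1 i1 _]] := gex_mkv ba il.
have pl : prv (idx g) < (rk (arc g)).+3 by apply: ltn_trans (prv_lt i2) (idx_lt g).
have [g2 [a2 i2' _]] := gex_mkv ba pl.
have sub : [set inr g1; inr g2] \subset [set w | gedge (inr g) w].
  apply/subsetP => w; rewrite !inE => /orP[] /eqP->.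
  - by rewrite ge_inr_inr a1 eqxx iadj_ge2 // i1 eqxx.
  - by rewrite ge_inr_inr a2 eqxx iadj_ge2 // i2' eqxx orbT.
apply: leq_trans (subset_leq_card sub); rewrite cards2.
have : inr g1 != inr g2 :> V.
  apply/eqP => -[] E; have := prv_lt i2; rewrite -i2' -E i1 => /ltnW.
  by rewrite ltnn.
by move=> ->.
Qed.

Lemma deg_gadget g : deg (inr g) <= 3.
Proof.
case: (ltnP (idx g) 2) => [|i2]; last by apply: leq_trans (deg_ge2_le i2) _.
case E: (idx g) => [|[|//]] _; first exact: deg0_le.
by apply: leq_trans (deg1_le E) _.
Qed.

Lemma card4 (T : finType) (S : {set T}) a b c d :
  a \in S -> b \in S -> c \in S -> d \in S ->
  a != b -> a != c -> a != d -> b != c -> b != d -> c != d -> 3 < #|S|.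
Proof.
move=> aS bS cS dS ab ac ad bc bd cd.
rewrite (cardsD1 a) aS (cardsD1 b) !inE eq_sym ab bS (cardsD1 c) !inE.
rewrite eq_sym bc eq_sym ac cS (cardsD1 d) !inE eq_sym cd eq_sym bd eq_sym ad dS.
by [].
Qed.

Hypothesis sysN : nsys H N.

Lemma other (x : Mv) : exists y : Mv, blk y = blk x /\ y != x.
Proof.
have [_ triv irr _] := sysN; have [h hH [nt1 hN]] := irr (blk x).
have hNx : h \notin N (blk x).
  apply: contra nt1 => hN'; apply/eqP; apply: triv hH _ => j.
  by case: (eqVneq j (blk x)) => [->|/hN].
exists (mmul h x); split=> //; apply/eqP => E.
have := congr1 cs E; rewrite cs_mmul hH_id //.
have [y0 y0H ->] := cs_rep x; rewrite -rcosetM => /cos_eq.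
move=> hin; apply: (negP hNx).
by rewrite -(memJ_norm h (coset_norm (nN (blk x)) (groupVr y0H))) conjgE invgK mulgA.
Qed.

Lemma deg_main x : 3 < deg (inl x).
Proof.
have [y [byx nyx]] := other x.
have bxx : blk (x, x).1 = blk (x, x).2 by [].
have bxy : blk (x, y).1 = blk (x, y).2 by rewrite /= byx.
have byx' : blk (y, x).1 = blk (y, x).2 by rewrite /= byx.
have [g1 [a1 i1 _]] := gex_mkv bxx (isT : 0 < (rk (x, x)).+3).
have [g2 [a2 i2 _]] := gex_mkv bxx (isT : 1 < (rk (x, x)).+3).
have [g3 [a3 i3 _]] := gex_mkv bxy (isT : 0 < (rk (x, y)).+3).
have [g4 [a4 i4 _]] := gex_mkv byx' (isT : 1 < (rk (y, x)).+3).
have m1 : inr g1 \in [set w | gedge (inl x) w] by rewrite inE /= /gadj a1 i1 !eqxx.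
have m2 : inr g2 \in [set w | gedge (inl x) w] by rewrite inE /= /gadj a2 i2 !eqxx orbT.
have m3 : inr g3 \in [set w | gedge (inl x) w] by rewrite inE /= /gadj a3 i3 !eqxx.
have m4 : inr g4 \in [set w | gedge (inl x) w] by rewrite inE /= /gadj a4 i4 !eqxx orbT.
have neq : forall g g' : Gv, (arc g != arc g') || (idx g != idx g') -> inr g != inr g' :> V.
  by move=> g g' /orP[] ne; apply/eqP => -[] E; move: ne; rewrite E eqxx.
have nxy : (x, x) != (x, y) by apply: (contraNneq _ nyx) => -[E]; rewrite E eqxx.
have nxy' : (x, x) != (y, x) by apply: (contraNneq _ nyx) => -[E]; rewrite E eqxx.
apply: (card4 m1 m2 m3 m4); apply: neq;
  by rewrite ?a1 ?a2 ?a3 ?a4 ?i1 ?i2 ?i3 ?i4 ?nxy ?nxy' ?orbT.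
Qed.


Lemma gadj0 y g : idx g = 0%N -> gadj y g = ((arc g).1 == y).
Proof. by rewrite /gadj => ->; rewrite orbF. Qed.

Lemma gadj1 y g : idx g = 1%N -> gadj y g = ((arc g).2 == y).
Proof. by rewrite /gadj => ->. Qed.

Lemma gadj_idx y g : gadj y g -> idx g <= 1.
Proof. by rewrite /gadj; case: (idx g) => [|[|i]]. Qed.

Lemma adj_inr g g' : gedge (inr g) (inr g') -> arc g = arc g' /\ iadj (idx g) (idx g').
Proof. by rewrite ge_inr_inr => /andP[/eqP]. Qed.

Definition ej (j : 'I_k) : Mv.
Proof.
refine (Sub (j, N j :* 1) _); apply/rcosetsP; exists 1 => //; exact: group1.
Defined.

Lemma blk_ej j : blk (ej j) = j. Proof. by []. Qed.
Lemma cs_ej j : cs (ej j) = N j :* 1. Proof. by []. Qed.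

Section Aut.
Variable s : {perm V}.
Hypothesis sA : s \in aut_set gedge.

Lemma autE u v : gedge (s u) (s v) = gedge u v.
Proof. by move: sA; rewrite inE => /forallP /(_ u) /forallP /(_ v) /eqP. Qed.

Definition sm (x : Mv) : Mv := if s (inl x) is inl y then y else x.
Definition sg (g : Gv) : Gv := if s (inr g) is inr g' then g' else g.

Lemma s_inl x : s (inl x) = inl (sm x).
Proof.
have := deg_aut (inl x) sA; rewrite /sm; case: (s (inl x)) => [y|g] // E.
by have := deg_main x; rewrite -E ltnNge deg_gadget.
Qed.

Lemma s_inr g : s (inr g) = inr (sg g).
Proof.
have := deg_aut (inr g) sA; rewrite /sg; case: (s (inr g)) => [y|g'] // E.
by have := deg_main y; rewrite E ltnNge deg_gadget.
Qed.

Lemma sg_inj : injective sg.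
Proof.
move=> g g' E; have : s (inr g) = s (inr g') by rewrite !s_inr E.
by move/perm_inj => -[].
Qed.

Lemma sge u v : gedge u v -> gedge (s u) (s v).
Proof. by rewrite autE. Qed.

Lemma deg_sg g : deg (inr (sg g)) = deg (inr g).
Proof. by rewrite -s_inr deg_aut. Qed.

Lemma sg_arc_idx (g : Gv) :
  arc (sg g) = (sm (arc g).1, sm (arc g).2) /\ idx (sg g) = idx g.
Proof.
set a := arc g; have ba : blk a.1 = blk a.2 := blk_arc g.
have [g0 [a0 i0 _]] := gex_mkv ba (isT : 0 < (rk a).+3).
have [g1 [a1 i1 _]] := gex_mkv ba (isT : 1 < (rk a).+3).
have s0 : idx (sg g0) = 0%N.
  have D : 3 <= deg (inr (sg g0)) by rewrite deg_sg deg0_ge.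
  case E: (idx (sg g0)) => [//|[|i]].
    by move: (leq_trans D (deg1_le E)).
  have i2 : 2 <= idx (sg g0) by rewrite E.
  by move: (leq_trans D (deg_ge2_le i2)).
have s01 : (arc (sg g0)).1 = sm a.1.
  have E : gedge (inr g0) (inl a.1) by rewrite ge_inl_inr gadj0 // a0.
  by move: (sge E); rewrite s_inr s_inl ge_inl_inr gadj0 // => /eqP.
have [e01 i01] : arc (sg g0) = arc (sg g1) /\ iadj 0 (idx (sg g1)).
  have E : gedge (inr g0) (inr g1) by rewrite ge_inr_inr a0 a1 i0 i1 eqxx.
  by move: (sge E); rewrite !s_inr => /adj_inr; rewrite s0.
have h1 : gadj (sm a.2) (sg g1).
  have E : gedge (inr g1) (inl a.2) by rewrite ge_inl_inr gadj1 // a1.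
  by move: (sge E); rewrite s_inr s_inl ge_inl_inr.
have s1 : idx (sg g1) = 1%N.
  move: i01 (gadj_idx h1); rewrite iadj0.
  by case: (idx (sg g1)) => [|[|[|i]]].
have s12 : (arc (sg g1)).2 = sm a.2 by move: h1; rewrite gadj1 // => /eqP.
have A0 : arc (sg g0) = (sm a.1, sm a.2).
  by rewrite [arc (sg g0)]surjective_pairing s01 e01 s12.
suff P : forall n (g' : Gv), arc g' = a -> idx g' < n ->
    arc (sg g') = (sm a.1, sm a.2) /\ idx (sg g') = idx g'.
  exact: (P _ g (erefl _) (ltnSn _)).
elim=> // n IH g' ag' ltg'.
case: (ltnP (idx g') n) => [lt|gedge]; first exact: IH.
have en : idx g' = n by apply/eqP; rewrite eqn_leq gedge -ltnS ltg'.
case: n IH ltg' gedge en => [|[|[|n]]] IH _ _ en.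
- have -> : g' = g0 by apply: gv_eq; rewrite ?ag' ?a0 ?en ?i0.
  by rewrite A0 s0 i0.
- have -> : g' = g1 by apply: gv_eq; rewrite ?ag' ?a1 ?en ?i1.
  by rewrite -e01 A0 s1 i1.
- have [e02 i02] : arc (sg g0) = arc (sg g') /\ iadj 0 (idx (sg g')).
    have E : gedge (inr g0) (inr g') by rewrite ge_inr_inr a0 ag' i0 en eqxx.
    by move: (sge E); rewrite !s_inr => /adj_inr; rewrite s0.
  split; first by rewrite -e02.
  move: i02; rewrite iadj0 en => /orP[] /eqP // E.
  have : sg g' = sg g1 by apply: gv_eq; rewrite -?e02 ?e01 // E s1.
  by move/sg_inj => E'; move: en; rewrite E' i1.
- have pl : n.+2 < (rk a).+3.
    by rewrite -ag'; apply: leq_trans _ (idx_lt g'); rewrite en.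
  have [gp [ap ip _]] := gex_mkv ba pl.
  have [|Ap Ip] := IH gp ap; first by rewrite ip.
  have [epq ipq] : arc (sg gp) = arc (sg g') /\ iadj (idx (sg gp)) (idx (sg g')).
    have E : gedge (inr gp) (inr g') by rewrite ge_inr_inr ap ag' eqxx ip en iadj_ge2 // eqxx.
    by move: (sge E); rewrite !s_inr => /adj_inr.
  split; first by rewrite -epq.
  move: ipq; rewrite Ip ip iadj_ge2 // en => /orP[] /eqP // E.
  have pq : prv n.+2 < (rk a).+3 by apply: ltn_trans (prv_lt _) pl.
  have [gq [aq iq _]] := gex_mkv ba pq.
  have [|Aq Iq] := IH gq aq; first by rewrite iq; apply: ltn_trans (prv_lt _) _.
  have : sg g' = sg gq by apply: gv_eq; rewrite -?epq ?Ap ?Aq // E Iq iq.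
  move/sg_inj => E'; move: en; rewrite E' iq => pe.
  by have := prv_lt (isT : 2 <= n.+2); rewrite pe ltnNge leqnSn.
Qed.

Lemma rk_sg g : rk (arc (sg g)) = rk (arc g).
Proof.
set a := arc g; have ba : blk a.1 = blk a.2 := blk_arc g.
have [gl [al il _]] := gex_mkv ba (ltnSn (rk a).+2).
have [Al Il] := sg_arc_idx gl; have [Ag _] := sg_arc_idx g.
have E : (sm a.1, sm a.2) = arc (sg gl) by rewrite Al al.
rewrite Ag E; apply/eqP; rewrite eqn_leq.
have le1 : rk a <= rk (arc (sg gl)) by have := idx_lt (sg gl); rewrite Il il !ltnS.
rewrite le1 andbT leqNgt; apply/negP => lt.
have i2 : 2 <= idx (sg gl) by rewrite Il il.
have D2 : 2 <= deg (inr (sg gl)).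
  apply: (@deg_mid (sg gl) i2). rewrite Il il !ltnS. done.
have D1 : deg (inr gl) <= 1 by apply: deg_last; rewrite il ?al.
by rewrite deg_sg in D2; move: (leq_trans D2 D1).
Qed.

Lemma col_s x y : blk x = blk y -> col (sm x) (sm y) = col x y.
Proof.
move=> bxy; have ba : blk (x, y).1 = blk (x, y).2 by [].
have [g [ag ig _]] := gex_mkv ba (isT : 0 < (rk (x, y)).+3).
have := rk_sg g; have [-> _] := sg_arc_idx g; rewrite ag /rk /=.
by move/ord_inj/enum_rank_inj.
Qed.

Lemma blk_s x : blk (sm x) = blk x.
Proof. by have := col_s (erefl (blk x)) => -[]. Qed.

Lemma cs_s x : cs (sm x) = cs x * cs (sm (ej (blk x))).
Proof.
set j := blk x.
have := col_s (_ : blk (ej j) = blk x) => /(_ erefl) -[] _.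
have [v vH csv] := cs_rep x.
have [a aH csa] := cs_rep (sm (ej j)).
have [b bH csb] := cs_rep (sm x).
rewrite blk_s blk_ej in csa; rewrite blk_s in csb.
rewrite csa csb csv cs_ej (cos_div (nN _)) // (cos_div (nN _)) ?group1 //.
rewrite (cos_mul (nN _)) // => /cos_eq.
rewrite mul1g invgK => z.
apply/rcoset_eqP; rewrite mem_rcoset.
have zi : v^-1 * b * a^-1 \in N j.
  by rewrite -groupV !invMg !invgK mulgA in z.
rewrite -(memJ_norm _ (coset_norm (nN j) (groupVr vH))) conjgE invgK in zi.
by rewrite invMg mulgA; move: zi; rewrite !mulgA mulgV mul1g.
Qed.

End Aut.


Lemma aut_eq (s t : {perm V}) : s \in aut_set gedge -> t \in aut_set gedge ->
  (forall j, cs (sm s (ej j)) = cs (sm t (ej j))) -> s = t.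
Proof.
move=> sA tA E.
have smE : forall x, sm s x = sm t x.
  move=> x; apply: mv_eq; first by rewrite (blk_s sA) (blk_s tA).
  by rewrite (cs_s sA) (cs_s tA) E.
apply/permP => [[x|g]]; first by rewrite (s_inl sA) (s_inl tA) smE.
rewrite (s_inr sA) (s_inr tA); congr inr; apply: gv_eq.
  by have [-> _] := sg_arc_idx sA g; have [-> _] := sg_arc_idx tA g; rewrite !smE.
by have [_ ->] := sg_arc_idx sA g; have [_ ->] := sg_arc_idx tA g.
Qed.

Definition Fm (s : {perm V}) : {ffun 'I_k -> {set gT}} := [ffun j => cs (sm s (ej j))].

Lemma card_aut : #|aut_set gedge| <= #|H|.
Proof.
have [_ _ _ prd] := sysN.
rewrite -(card_in_imset (f := Fm)); last first.
  move=> s t sA tA /ffunP E; apply: (aut_eq sA tA) => j.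
  by have := E j; rewrite !ffunE.
apply: leq_trans (_ : #|family (fun j => rcosets (N j) H)| <= _).
  apply: subset_leq_card; apply/subsetP => f /imsetP[s sA ->].
  apply/familyP => j; rewrite ffunE.
  by have := valP (sm s (ej j)); rewrite -/(blk _) -/(cs _) (blk_s sA).
rewrite card_family foldrE big_image -prd.
by apply: eq_leq; apply: eq_bigr.
Qed.

Lemma phim_inj : 'injm phim.
Proof.
have [_ triv _ _] := sysN.
apply/injmP => h1 h2 h1H h2H E.
have Ej : forall j, h1 * h2^-1 \in N j.
  move=> j; have := congr1 (fun p : {perm V} => p (inl (ej j))) E.
  rewrite /= !phiE /= => E'.
  have := congr1 (fun v => if v is inl z then cs z else set0) E'.
  rewrite /= !cs_mmul cs_ej !rcoset1 !hH_id //.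
  exact: cos_eq.
have := triv _ (groupM h1H (groupVr h2H)) Ej.
by move/eqP; rewrite mulg_eq1 invgK => /eqP.
Qed.

Lemma phim_im : phim @* H = aut_group gedge.
Proof.
apply/eqP; rewrite eqEcard; apply/andP; split.
  by apply/subsetP => p /morphimP[h _ hH ->]; exact: phi_aut.
by rewrite card_injm ?phim_inj //; exact: card_aut.
Qed.

Lemma iso_aut : aut_group gedge \isog H.
Proof.
rewrite isog_sym; apply/isogP; exists phim; [exact: phim_inj | exact: phim_im].
Qed.

Lemma mmul_fix h x : h \in H -> h \in N (blk x) -> mmul h x = x.
Proof.
move=> hH hN; apply: mv_eq => //; rewrite cs_mmul hH_id //.
have [y yH ->] := cs_rep x; exact: (cos_fix (nN _)).
Qed.

Definition vb (v : V) : 'I_k :=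
  match v with inl x => blk x | inr g => blk (arc g).1 end.

Lemma fixnum : fixing_number gedge k.
Proof.
have [_ triv irr _] := sysN.
have aut1 : (1 : {perm V}) \in aut_set gedge := group1 (aut_group gedge).
have sm_fix : forall s x, s \in aut_set gedge -> s (inl x) = inl x -> sm s x = x.
  by move=> s x sA; rewrite (s_inl sA) => -[].
split.
  exists [set (inl (ej j) : V) | j : 'I_k]; split; last first.
    rewrite card_imset ?card_ord // => j j' E.
    by have := congr1 (fun v => if v is inl z then blk z else j) E.
  apply/eqP; rewrite eqEsubset (sub1G (stab_group gedge _)) andbT.
  apply/subsetP => s /stabP[sA Fix].
  rewrite inE; apply/eqP; apply: (aut_eq sA aut1) => j.
  have Fj : s (inl (ej j)) = inl (ej j) by apply: Fix; exact: imset_f.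
  by rewrite (sm_fix _ _ sA Fj) (sm_fix _ _ aut1 (perm1 _)).
move=> S stS; rewrite leqNgt; apply/negP => ltS.
have : ~~ ([set: 'I_k] \subset vb @: S).
  apply/negP => /subset_leq_card; rewrite cardsT card_ord => le.
  by have := leq_trans le (leq_imset_card vb S); rewrite leqNgt ltS.
case/subsetPn => j0 _ nj0.
have [h hH [nt1 hN]] := irr j0.
have : phi h \in stab gedge S.
  apply/stabP; split; first exact: phi_aut.
  move=> v vS; rewrite phiE.
  have nv : vb v != j0 by apply: contraNneq nj0 => <-; exact: imset_f.
  case: v vS nv => [x|g] _ /= nv; first by rewrite mmul_fix // hN.
  congr inr; apply: gv_eq => //; rewrite arc_gmul !mmul_fix ?hN -?blk_arc //.
  by case: (arc g).
rewrite stS => /set1P p1.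
have : h \in 'ker phim by apply/kerP.
by rewrite (trivgP phim_inj) => /set1P h1; rewrite h1 eqxx in nt1.
Qed.

Lemma realize : fix_set H k.
Proof.
exists V, gedge; split; first by split; [exact: ge_sym | exact: ge_irr].
split; [exact: iso_aut | exact: fixnum].
Qed.

End Graph.


Unset Implicit Arguments.

Theorem corollary1 (gT : finGroupType) (H Q A : {group gT}) (d : nat) :
  Q \x A = H ->
  Q \isog 'Q_8 ->
  abelian A ->
  (forall a, a \in A -> #[a] != 4%N) ->
  hamiltonian H ->
  num_elementary_divisors A d ->
  forall k : nat, fix_set H k <-> (1 <= k <= d.+1)%N.
Proof.
move=> defH isoQ _ _ [nabH hamH] ned k; split.
  case=> V [e [sge [iso fn]]]; apply/andP; split.
    rewrite lt0n; apply/eqP => k0; subst k.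
    case: fn => [[S [stS cS]] _].
    have S0 : S = set0 by apply/eqP; rewrite -cards_eq0 cS.
    have : aut_group e = 1 :> {set _}.
      rewrite -stS S0; apply/setP => g; rewrite /stab !inE.
      by apply/esym/andb_idr => _; apply/forall_inP => s; rewrite inE.
    move=> A1; have := card_isog iso; rewrite A1 cards1 => /esym/eqP.
    rewrite -trivg_card1 => /eqP H1.
    by move: nabH; rewrite H1 abelian1.
  have [ps [pps sps ops]] := ohm_H defH isoQ ned.
  by rewrite -sps; apply: (upper_bound iso hamH pps ops fn).
move=> kr.
have oQ : #|Q| = 8%N by rewrite (card_isog isoQ) (card_quaternion (n:=3)).
have ntQ : Q :!=: 1 by rewrite -cardG_gt1 oQ.
case: ned => C [defA hC].
have ntC : forall i, C i :!=: 1.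
  move=> i; have [_ [p [m [pp oC]]]] := hC i.
  by rewrite -cardG_gt1 oC expnS (leq_trans (prime_gt1 pp)) // leq_pmulr // expn_gt0 prime_gt0.
have [N sysN] := nsys_exists ntQ defH defA ntC kr.
have nN : forall j, N j <| H by move=> j; apply: hamH; case: sysN => sN _ _ _; exact: sN.
exact: realize nN sysN.
Qed.
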